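(* Let $(\Omega,\mathcal R,\mathcal K)$ be a bidirectional kinetic system with matrix of reactions having columns $R_1,\dots,R_{|\mathcal R|/2}$ and cycle space $\mathcal C$, and let $\mathcal R_a\subset\mathcal R$. Suppose there is a cycle $c\in\mathcal C$ with $\sum_{j=1}^{|\mathcal R|/2}\log\!\left(\frac{K_{-R_j}}{K_{R_j}}\right)c(j)\neq0$ and such that every $R_j$ with $c(j)\neq0$ (and its reverse) belongs to $\mathcal R_a$. Then $(\Omega,\mathcal R,\mathcal K)$ does not admit an $\mathcal R_a$-admissible closed completion.
   Context: A chemical network is $(\Omega,\mathcal R)$ with $\Omega=\{1,\dots,N\}$ and $\mathcal R$ a finite set of nonzero integer vectors indexed by $\Omega$. $I(R)=\{i:R(i)<0\}$, $F(R)=\{i:R(i)>0\}$. Bidirectional: $R\in\mathcal R\Rightarrow-R\in\mathcal R$; $\mathcal R_s$ contains exactly one of each pair $\{R,-R\}$; the matrix of reactions $\mathbf R$ has the elements $R_1,\dots,R_{|\mathcal R_s|}$ of $\mathcal R_s$ as columns; cycle space $\mathcal C=\ker\mathbf R$. Conservation laws $\mathcal M=(\mathrm{span}\,\mathcal R)^\perp$; conservative: $\mathcal M\cap(0,\infty)^\Omega\ne\emptyset$. Kinetic system: rates $\mathcal K:\mathcal R\to(0,\infty)$, $K_R=\mathcal K(R)$; detailed balance: there is $\bar N\in(0,\infty)^\Omega$ with $K_R\prod_{i\in I(R)}\bar N_i^{-R(i)}=K_{-R}\prod_{i\in F(R)}\bar N_i^{R(i)}$ for all $R\in\mathcal R_s$.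 Closed: detailed balance, conservative, and $I(R),F(R)\neq\emptyset$ for all reactions. $\pi_Av=(v(i))_{i\in A}$. For $(\Omega_c,\mathcal R_c,\mathcal K_c)$ with $\Omega\subset\Omega_c$ and positive $n=(n_i)_{i\in\Omega_c\setminus\Omega}$, reduced rates $\mathcal K_c[n](R)=\sum_{\bar R\in\mathcal R_c:\pi_\Omega\bar R=R}\mathcal K_c(\bar R)\prod_{s\in(\Omega_c\setminus\Omega)\cap I(\bar R)}n_s^{-\bar R(s)}$. A completion of $(\Omega,\mathcal R,\mathcal K)$ is a kinetic system $(\Omega_c,\mathcal R_c,\mathcal K_c)$ with $\Omega\subset\Omega_c$, $\mathcal R=\{\pi_\Omega R:R\in\mathcal R_c\}$, and $\mathcal K=\mathcal K_c[n]$ for some such $n$. It is $\mathcal R_a$-admissible if $\pi_{\Omega_c\setminus\Omega}R=0$ for every $R\in\mathcal R_c$ with $\pi_\Omega R\in\mathcal R_a$ (the reactions in $\mathcal R_a$ are the constrained reactions). *)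

(* Defs.v *)
From HB Require Import structures.
From mathcomp Require Import all_boot all_order all_algebra.
From mathcomp Require Import finmap.
From mathcomp Require Import reals exp.
Set Implicit Arguments. Unset Strict Implicit. Unset Printing Implicit Defensive.
Import Order.TTheory GRing.Theory Num.Theory.
Local Open Scope ring_scope.
Local Open Scope fset_scope.

Definition vec (S : finType) := {ffun S -> int}.

Definition vneg (S : finType) (R : vec S) : vec S := [ffun i => - R i].

Definition Iset (S : finType) (R : vec S) : {set S} := [set i | R i < 0].
Definition Fset (S : finType) (R : vec S) : {set S} := [set i | 0 < R i].

Definition network (S : finType) (Rset : {fset vec S}) : Prop :=
  forall R, R \in Rset -> R <> [ffun => 0].

Definition bidirectional (S : finType) (Rset : {fset vec S}) : Prop :=
  forall R, R \in Rset -> vneg R \in Rset.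

Definition kinetic (R : realType) (S : finType) (Rset : {fset vec S})
  (K : vec S -> R) : Prop :=
  network Rset /\ forall Rc, Rc \in Rset -> 0 < K Rc.

(* Rs lists R_1,...,R_m: the elements of R_s, one of each pair {R,-R}. *)
Definition is_Rs (S : finType) (Rset : {fset vec S}) (Rs : seq (vec S)) : Prop :=
  uniq Rs /\ (forall R, R \in Rs -> R \in Rset) /\
  (forall R, R \in Rset -> (R \in Rs) != (vneg R \in Rs)).

(* c is in the cycle space ker (matrix with columns R_1..R_m). *)
Definition is_cycle (R : realType) (S : finType) (Rs : seq (vec S))
  (c : 'I_(size Rs) -> R) : Prop :=
  forall i : S, \sum_(j < size Rs) c j * ((nth [ffun => 0] Rs j) i)%:~R = 0.

Definition detailed_balance (R : realType) (S : finType) (Rset : {fset vec S})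
  (K : vec S -> R) : Prop :=
  bidirectional Rset /\
  exists Nb : S -> R, (forall i, 0 < Nb i) /\
    forall Rc, Rc \in Rset ->
      K Rc * \prod_(i in Iset Rc) Nb i ^+ absz (Rc i)
      = K (vneg Rc) * \prod_(i in Fset Rc) Nb i ^+ absz (Rc i).

Definition conservative (R : realType) (S : finType) (Rset : {fset vec S}) : Prop :=
  exists m : S -> R, (forall i, 0 < m i) /\
    forall Rc, Rc \in Rset -> \sum_i m i * (Rc i)%:~R = 0.

Definition closed_system (R : realType) (S : finType) (Rset : {fset vec S})
  (K : vec S -> R) : Prop :=
  detailed_balance Rset K /\ conservative R Rset /\
  forall Rc, Rc \in Rset -> Iset Rc != set0 /\ Fset Rc != set0.

(* Completion species Omega_c = Omega (+) T, with Omega embedded via inl. *)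
Definition projO (S T : finType) (Rb : vec (S + T)%type) : vec S :=
  [ffun i => Rb (inl i)].
Definition projT (S T : finType) (Rb : vec (S + T)%type) : vec T :=
  [ffun t => Rb (inr t)].

Definition reduced_rate (R : realType) (S T : finType)
  (Rc : {fset vec (S + T)%type}) (Kc : vec (S + T)%type -> R) (n : T -> R)
  (Rv : vec S) : R :=
  \sum_(Rb <- Rc | projO Rb == Rv)
     Kc Rb * \prod_(s : T | Rb (inr s) < 0) n s ^+ absz (Rb (inr s)).

Definition is_completion (R : realType) (S T : finType)
  (Rset : {fset vec S}) (K : vec S -> R)
  (Rc : {fset vec (S + T)%type}) (Kc : vec (S + T)%type -> R) : Prop :=
  kinetic Rc Kc /\
  (forall Rv, Rv \in Rset <-> exists2 Rb, Rb \in Rc & projO Rb = Rv) /\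
  exists n : T -> R, (forall s, 0 < n s) /\
    forall Rv, Rv \in Rset -> K Rv = reduced_rate Rc Kc n Rv.

Definition admissible (S T : finType) (Ra : {fset vec S})
  (Rc : {fset vec (S + T)%type}) : Prop :=
  forall Rb, Rb \in Rc -> projO Rb \in Ra -> projT Rb = [ffun => 0].

Definition admits_admissible_closed_completion (R : realType) (N : nat)
  (Rset : {fset vec 'I_N}) (K : vec 'I_N -> R) (Ra : {fset vec 'I_N}) : Prop :=
  exists (M : nat) (Rc : {fset vec ('I_N + 'I_M)%type})
         (Kc : vec ('I_N + 'I_M)%type -> R),
    is_completion Rset K Rc Kc /\ admissible Ra Rc /\ closed_system Rc Kc.

(* Main.v *)
Require Import Defs.
From HB Require Import structures.
From mathcomp Require Import all_boot all_order all_algebra.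
From mathcomp Require Import finmap.
From mathcomp Require Import reals exp.
From mathcomp Require Import sequences.
Import Order.TTheory GRing.Theory Num.Theory.
Local Open Scope ring_scope.
Local Open Scope fset_scope.

Lemma prod_expR (R : realType) (S : finType) (A : {set S}) (Rb : vec S)
  (Nb : S -> R) : (forall i, 0 < Nb i) ->
  \prod_(i in A) Nb i ^+ absz (Rb i) =
  expR (\sum_(i in A) (absz (Rb i))%:R * ln (Nb i)).
Proof.
move=> Npos; rewrite expR_sum; apply: eq_bigr => i _.
by rewrite expRM_natl lnK // posrE.
Qed.

Lemma db_log (R : realType) (S : finType) (Rb : vec S) (k1 k2 : R)
  (Nb : S -> R) : 0 < k1 -> 0 < k2 -> (forall i, 0 < Nb i) ->
  k1 * \prod_(i in Iset Rb) Nb i ^+ absz (Rb i)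
    = k2 * \prod_(i in Fset Rb) Nb i ^+ absz (Rb i) ->
  ln (k2 / k1) = - \sum_i (Rb i)%:~R * ln (Nb i).
Proof.
move=> k1p k2p Npos; rewrite !prod_expR //.
set a := \sum_(i in Iset Rb) _; set b := \sum_(i in Fset Rb) _.
move=> E.
have -> : k2 / k1 = expR (a - b).
  rewrite expRD expRN.
  have e1 : k1 != 0 by rewrite gt_eqF.
  have e2 : expR b != 0 by rewrite gt_eqF // expR_gt0.
  have -> : k2 = k1 * expR a / expR b by rewrite E mulfK.
  by rewrite mulrC !mulrA mulVf // mul1r.
rewrite expRK /a /b (big_mkcond (fun i => i \in Iset Rb))
  (big_mkcond (fun i => i \in Fset Rb)) /= -sumrB -sumrN.
apply: eq_bigr => i _; rewrite /Iset /Fset !inE.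
case: (ltrgtP (Rb i) 0) => h.
- by rewrite subr0 natr_absz ltr0_norm // intrN mulNr.
- by rewrite sub0r natr_absz gtr0_norm.
- by rewrite h /= subr0 mul0r oppr0.
Qed.

Definition emb {S : finType} (T : finType) (v : vec S) : vec (S + T)%type :=
  [ffun x => match x with inl i => v i | inr _ => 0 end].

Lemma emb_vneg (S T : finType) (v : vec S) :
  emb T (vneg v) = vneg (emb T v).
Proof. by apply/ffunP; case=> [i|t]; rewrite !ffunE // oppr0. Qed.

Lemma reduced_one (R : realType) (S T : finType)
  (Rc : {fset vec (S + T)%type}) (Kc : vec (S + T)%type -> R) (n : T -> R)
  (Rv : vec S) :
  emb T Rv \in Rc ->
  (forall Rb, Rb \in Rc -> projO Rb = Rv -> Rb = emb T Rv) ->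
  reduced_rate Rc Kc n Rv = Kc (emb T Rv).
Proof.
move=> hin huniq; rewrite /reduced_rate (big_rem (emb T Rv)) //.
have -> : projO (emb T Rv) == Rv.
  by apply/eqP/ffunP => i; rewrite !ffunE.
rewrite big1_seq; last by move=> s; rewrite ffunE ltxx.
rewrite mulr1 big1_seq; first exact: addr0.
move=> Rb /andP [/eqP hp hr].
have hRc : Rb \in Rc by apply: (mem_rem hr).
have e := huniq Rb hRc hp.
by move: hr; rewrite e mem_rem_uniq ?fset_uniq // inE eqxx.
Qed.

Lemma sum_emb (R : realType) (S T : finType) (v : vec S) (f : (S + T)%type -> R) :
  \sum_x ((emb T v) x)%:~R * f x = \sum_i (v i)%:~R * f (inl i).
Proof.
have h1 : \sum_i ((emb T v) (inr i))%:~R * f (inr i) = 0.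
  by apply: big1 => t _; rewrite /emb ffunE mul0r.
have h2 : \sum_i ((emb T v) (inl i))%:~R * f (inl i) = \sum_i (v i)%:~R * f (inl i).
  by apply: eq_bigr => i _; rewrite /emb ffunE.
rewrite big_sumType /=; exact: (etrans (congr2 +%R h2 h1) (addr0 _)).
Qed.

Theorem proposition6p8 (R : realType) (N : nat)
  (Rset : {fset vec 'I_N}) (K : vec 'I_N -> R)
  (Rs : seq (vec 'I_N)) (Ra : {fset vec 'I_N}) :
  kinetic Rset K -> bidirectional Rset -> is_Rs Rset Rs ->
  Ra `<=` Rset ->
  (exists c : 'I_(size Rs) -> R,
     @is_cycle R _ Rs c /\
     \sum_(j < size Rs)
        ln (K (vneg (nth [ffun => 0] Rs j)) / K (nth [ffun => 0] Rs j)) * c j != 0 /\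
     (forall j : 'I_(size Rs), c j != 0 ->
        nth [ffun => 0] Rs j \in Ra /\ vneg (nth [ffun => 0] Rs j) \in Ra)) ->
  ~ admits_admissible_closed_completion Rset K Ra.
Proof.
move=> kin bid isRs sub [c [cyc [nz hc]]]
  [M [Rc [Kc [[kinc [hiff [n [npos Kred]]]] [adm [[bidc [Nb [Nbpos db]]] _]]]]]].
have key : forall Rv, Rv \in Ra -> emb 'I_M Rv \in Rc /\ K Rv = Kc (emb 'I_M Rv).
  move=> Rv hRa.
  have hRs : Rv \in Rset by apply: (fsubsetP sub).
  have huniq : forall Rb, Rb \in Rc -> projO Rb = Rv -> Rb = emb 'I_M Rv.
    move=> Rb hb hp.
    have hT := adm Rb hb (etrans (congr1 (fun x => x \in Ra) hp) hRa).
    apply/ffunP; case=> [i|t]; rewrite ffunE.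
    - by rewrite -hp ffunE.
    - by move/ffunP: hT => /(_ t); rewrite !ffunE.
  have [Rb hb hp] := (proj1 (hiff Rv) hRs).
  have he := huniq Rb hb hp.
  have hin : emb 'I_M Rv \in Rc by rewrite -he.
  split => //.
  by rewrite (Kred Rv hRs) (@reduced_one _ _ _ Rc Kc n Rv hin huniq).
set L := fun i : 'I_N => ln (Nb (inl i)).
move: nz.
rewrite (eq_bigr (fun j : 'I_(size Rs) =>
   - \sum_i c j * (nth [ffun => 0] Rs j i)%:~R * L i)).
  rewrite sumrN exchange_big /= big1 ?oppr0 ?eqxx // => i _.
  by rewrite -mulr_suml cyc mul0r.
move=> j _.
have [cj0|cjn] := eqVneq (c j) 0.
  by rewrite cj0 mulr0 big1 ?oppr0 // => i _; rewrite !mul0r.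
have [h1 h2] := hc j cjn.
set Rj := nth [ffun => 0] Rs j in h1 h2 *.
have [e1 k1] := key Rj h1.
have [e2 k2] := key (vneg Rj) h2.
rewrite k1 k2 emb_vneg.
have e3 : vneg (emb 'I_M Rj) \in Rc by apply: bidc.
rewrite (@db_log _ _ (emb 'I_M Rj) _ _ Nb _ _ _ (db _ e1)); first last.
- exact: Nbpos.
- exact: (proj2 kinc).
- exact: (proj2 kinc).
rewrite sum_emb.
rewrite mulNr mulr_suml; congr (- _); apply: eq_bigr => i _.
by rewrite /L mulrC mulrA.
Qed.
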